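(* Let $d\ge1$ and $\lambda=(\lambda_1,\dots,\lambda_d)$ a vector of positive integers with $\sum_t\lambda_t=n\ge2$. For distinct $i,j\in\{0,1,\dots,n-2\}$, we have $i\preceq j$ in $P(\lambda)$ if and only if $i<j$ and $p(i)+p(j-i)=p(j)$.
   Context: $\Delta_\lambda=\mathrm{conv}(e_1,\dots,e_d,\lambda)\subset\mathbb{R}^d$, with fundamental parallelepiped $\Pi_\lambda=\{\sum_{i=1}^d\gamma_i(1,e_i)+\gamma_{d+1}(1,\lambda):0\le\gamma_i<1\}\subset\mathbb{R}^{d+1}$. The poset $P(\lambda)$ is the set $\Pi_\lambda\cap\mathbb{Z}^{d+1}$ ordered by $\sigma\preceq\mu$ iff $\mu-\sigma\in\Pi_\lambda\cap\mathbb{Z}^{d+1}$. For $0\le b<n-1$ set $p(b)=\left(\sum_{t=1}^d\lceil b\lambda_t/(n-1)\rceil-b,\ \lceil b\lambda_1/(n-1)\rceil,\dots,\lceil b\lambda_d/(n-1)\rceil\right)$; the map $b\mapsto p(b)$ is a bijection from $\{0,\dots,n-2\}$ onto $\Pi_\lambda\cap\mathbb{Z}^{d+1}$, and each integer $b$ is identified with $p(b)$, so $P(\lambda)$ is regarded as a partial order $\preceq$ on $\{0,\dots,n-2\}$. *)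

(* Defs.v *)
From HB Require Import structures.
From mathcomp Require Import all_boot all_order all_algebra.
From mathcomp Require Import reals.
Set Implicit Arguments. Unset Strict Implicit. Unset Printing Implicit Defensive.
Import Order.TTheory GRing.Theory Num.Theory.
Local Open Scope ring_scope.

Definition nlam (d : nat) (lam : 'I_d -> nat) : nat := (\sum_(t < d) lam t)%N.

Definition ceil_div (a m : nat) : nat := ((a + m.-1) %/ m)%N.

Definition cb (d : nat) (lam : 'I_d -> nat) (b : nat) (t : 'I_d) : nat :=
  ceil_div (b * lam t) (nlam lam).-1.

(* p(b) in Z^{d+1}; coordinate 0 is the first coordinate,
   coordinate lift ord0 t is the (t+1)-th one. *)
Definition pvec (d : nat) (lam : 'I_d -> nat) (b : nat) : 'rV[int]_(d.+1) :=
  \row_(k < d.+1)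
    match unlift ord0 k with
    | Some t => (cb lam b t)%:Z
    | None => (\sum_(t < d) (cb lam b t)%:Z) - b%:Z
    end.

(* x lies in the half-open fundamental parallelepiped
   Pi_lambda = { sum_i g_i (1,e_i) + g' (1,lambda) : 0 <= g_i, g' < 1 } in R^{d+1}. *)
Definition inPi (R : realType) (d : nat) (lam : 'I_d -> nat) (x : 'rV[int]_(d.+1)) : Prop :=
  exists (g : 'I_d -> R) (g' : R),
    (forall t, 0 <= g t < 1) /\ 0 <= g' < 1 /\
    (x ord0 ord0)%:~R = \sum_(t < d) g t + g' /\
    (forall t : 'I_d, (x ord0 (lift ord0 t))%:~R = g t + g' * (lam t)%:R).

(* The order of P(lambda) transported to {0,...,n-2} via b |-> p(b):
   sigma <= mu iff mu - sigma in Pi_lambda cap Z^{d+1}. *)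
Definition preceq (R : realType) (d : nat) (lam : 'I_d -> nat) (i j : nat) : Prop :=
  inPi R lam (pvec lam j - pvec lam i).

(* Main.v *)
Require Import Defs.
From HB Require Import structures.
From mathcomp Require Import all_boot all_order all_algebra.
From mathcomp Require Import reals.
From mathcomp Require Import zify ring lra.
Import Order.TTheory GRing.Theory Num.Theory.
Local Open Scope ring_scope.

Lemma ceil_spec (a m : nat) : (0 < m)%N ->
  (a <= ceil_div a m * m)%N /\ (ceil_div a m * m < a + m)%N.
Proof.
move=> m0; rewrite /ceil_div.
have := divn_eq (a + m.-1) m; have := ltn_pmod (a + m.-1) m0.
set c := ((a + m.-1) %/ m)%N; set r := ((a + m.-1) %% m)%N.
lia.
Qed.

Lemma ceil_uniq (a m k : nat) : (0 < m)%N -> (a <= k * m)%N -> (k * m < a + m)%N ->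
  ceil_div a m = k.
Proof.
move=> m0 h1 h2; have [h3 h4] := ceil_spec a m m0.
set c := ceil_div a m in h3 h4 *.
nia.
Qed.

Lemma pvec0 d (lam : 'I_d -> nat) b :
  pvec lam b ord0 ord0 = \sum_(t < d) (cb lam b t)%:Z - b%:Z.
Proof. by rewrite mxE unlift_none. Qed.

Lemma pvecS d (lam : 'I_d -> nat) b t :
  pvec lam b ord0 (lift ord0 t) = (cb lam b t)%:Z.
Proof. by rewrite mxE liftK. Qed.

Lemma subE m n (A B : 'M[int]_(m, n)) a k : (A - B) a k = A a k - B a k.
Proof. by rewrite !mxE. Qed.
Lemma addE m n (A B : 'M[int]_(m, n)) a k : (A + B) a k = A a k + B a k.
Proof. by rewrite !mxE. Qed.
Theorem lemma2p13 (R : realType) (d : nat) (lam : 'I_d -> nat) :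
  (1 <= d)%N ->
  (forall t, 0 < lam t)%N ->
  (2 <= nlam lam)%N ->
  forall i j : nat, (i < (nlam lam).-1)%N -> (j < (nlam lam).-1)%N -> i <> j ->
    (preceq R lam i j <-> ((i < j)%N /\ pvec lam i + pvec lam (j - i) = pvec lam j)).
Proof.
move=> d1 lpos n2 i j iN jN ij.
have N0 : (0 < (nlam lam).-1)%N by lia.
have nN : nlam lam = (nlam lam).-1.+1 by lia.
set N := (nlam lam).-1 in N0 nN iN jN *.
have NR : (N%:R : R) != 0 by rewrite pnatr_eq0 -lt0n.
have NRp : (0 : R) < N%:R by rewrite ltr0n.
have sumlam : \sum_(t < d) ((lam t)%:R : R) = N%:R + 1.
  by rewrite -natr_sum -[(\sum_(t < d) _)%N]/(nlam lam) nN -addn1 natrD.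
have cR : forall k : nat, ((k%:Z)%:~R : R) = k%:R by [].
split.
- case=> g [g' [hg [hg' [h0 ht]]]].
  have hx0 : (((pvec lam j - pvec lam i) ord0 ord0)%:~R : R) =
     (\sum_(t < d) (cb lam j t)%:R - j%:R) - (\sum_(t < d) (cb lam i t)%:R - i%:R).
    by rewrite subE !pvec0 !(intrD, intrN, intrB, rmorph_sum).
  have hxt t : (((pvec lam j - pvec lam i) ord0 (lift ord0 t))%:~R : R) =
     (cb lam j t)%:R - (cb lam i t)%:R.
    by rewrite subE !pvecS intrD intrN.
  have hs : \sum_(t < d) (((cb lam j t)%:R : R) - (cb lam i t)%:R) =
            \sum_(t < d) g t + g' * (N%:R + 1).
    by rewrite -sumlam mulr_sumr -big_split; apply: eq_bigr => t _; rewrite -hxt ht.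
  rewrite sumrB in hs; rewrite hx0 in h0.
  have key : g' * N%:R = j%:R - i%:R by lra.
  have lij : (i < j)%N.
    have : (i%:R <= j%:R :> R) by rewrite -subr_ge0 -key mulr_ge0 // ?ler0n; case/andP: hg'.
    rewrite ler_nat => ?; lia.
  split => //.
  set b := (j - i)%N.
  have keyb : g' * N%:R = b%:R by rewrite key natrB // ltnW.
  have hc t : (cb lam i t)%:Z + (cb lam b t)%:Z = (cb lam j t)%:Z.
    have [c1 c2] := ceil_spec (b * lam t) N N0.
    rewrite -/(cb lam b t) in c1 c2.
    have gt := ht t; rewrite hxt in gt.
    have [g0 g1] := andP (hg t).
    have e1 : (0 : R) <= ((cb lam j t)%:R - (cb lam i t)%:R) * N%:R - (b * lam t)%:R.
      rewrite natrM -keyb. nra.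
    have e2 : ((cb lam j t)%:R - (cb lam i t)%:R) * N%:R - (b * lam t)%:R < (N%:R : R).
      rewrite natrM -keyb. nra.
    have E : (((((cb lam j t)%:Z - (cb lam i t)%:Z) * N%:Z - (b * lam t)%:Z))%:~R : R)
       = ((cb lam j t)%:R - (cb lam i t)%:R) * N%:R - (b * lam t)%:R.
      by rewrite intrD intrN intrM intrD intrN.
    rewrite -E -[0 : R]/((0 : int)%:~R) ler_int in e1.
    rewrite -E -[(N%:R : R)]/((N%:Z)%:~R) ltr_int in e2.
    nia.
  apply/matrixP => a k; rewrite [a]ord1.
  case: (unliftP ord0 k) => [t ->|->].
    by rewrite addE !pvecS hc.
  rewrite addE !pvec0.
  have -> : \sum_(t < d) (cb lam j t)%:Z = \sum_(t < d) (cb lam i t)%:Z + \sum_(t < d) (cb lam b t)%:Z.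
    rewrite -big_split. apply: eq_bigr => t _. exact: (esym (hc t)).
  have -> : (b%:Z) = j%:Z - i%:Z by rewrite /b; lia.
  ring.
- case=> lij H.
  set b := (j - i)%N in H.
  have E : pvec lam j - pvec lam i = pvec lam b by rewrite -H addrC addKr.
  rewrite /preceq E /inPi.
  have bN : (b < N)%N by rewrite /b; lia.
  exists (fun t => (cb lam b t)%:R - (b * lam t)%:R / N%:R), (b%:R / N%:R).
  split.
    move=> t; have [c1 c2] := ceil_spec (b * lam t) N N0.
    rewrite -/(cb lam b t) in c1 c2.
    rewrite -(ler_nat R) natrM in c1; rewrite -(ltr_nat R) natrD !natrM in c2.
    have yN : (b%:R * (lam t)%:R / N%:R) * N%:R = b%:R * (lam t)%:R :> R by rewrite divfK.
    rewrite natrM; apply/andP; split; nra.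
  split.
    have bNR : (b%:R : R) < N%:R by rewrite ltr_nat.
    have yN : (b%:R / N%:R) * N%:R = b%:R :> R by rewrite divfK.
    have b0 : (0 : R) <= b%:R by rewrite ler0n.
    apply/andP; split; nra.
  split.
    rewrite pvec0 intrD intrN rmorph_sum /= sumrB.
    rewrite -[\sum_(t < d) (b * lam t)%:R / N%:R]/(\sum_(t < d) (b * lam t)%:R * N%:R^-1).
    rewrite -big_distrl /=.
    have hsum : \sum_(t < d) ((b * lam t)%:R : R) = b%:R * (N%:R + 1).
      by rewrite -sumlam mulr_sumr; apply: eq_bigr => t _; rewrite natrM.
    rewrite hsum !cR. by field.
  move=> t; rewrite pvecS natrM cR. by field.
Qed.
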